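(* Consider a matched pair study and assume Fisher's null $H_0$ holds. (i) For any $1\le k\le I$ and $\alpha\in(0,1)$, $\{\Gamma_0\in[1,\infty]:\overline p_{\Gamma_0;k}>\alpha\}$ is a $1-\alpha$ confidence set for $\Gamma^\star_{(k)}$, and it equals either $(\hat\Gamma_{(k)},\infty]$ or $[\hat\Gamma_{(k)},\infty]$, where $\hat\Gamma_{(k)}=\inf\{\Gamma_0\ge1:\overline p_{\Gamma_0;k}>\alpha\}$. (ii) For any $\Gamma_0$ and $\alpha\in(0,1)$, $\{I-k:\overline p_{\Gamma_0;k}>\alpha,\ 0\le k\le I\}$ is a $1-\alpha$ confidence set for $I^\star(\Gamma_0)$, and it equals $\{\hat I(\Gamma_0),\hat I(\Gamma_0)+1,\dots,I\}$ with $\hat I(\Gamma_0)=I-\sup\{k:\overline p_{\Gamma_0;k}>\alpha,\ 0\le k\le I\}$.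
   Context: Setting: $I$ matched pairs, potential outcomes fixed, $Z$ (one treated unit per pair) is the only randomness with true mechanism $\mathbb P(Z=z)=\prod_i\prod_j(p^\star_{ij})^{z_{ij}}$, $p^\star_{i1}+p^\star_{i2}=1$; true hidden bias $\Gamma^\star_i=\max_jp^\star_{ij}/\min_kp^\star_{ik}\in[1,\infty]$; $\Gamma^\star_{(k)}$ is its $k$th smallest value, and $I^\star(\Gamma_0)=\#\{i:\Gamma^\star_i>\Gamma_0\}$. Fisher's null $H_0$: $Y_{ij}(1)=Y_{ij}(0)$ for all $i,j$. $T=\sum_i\sum_jZ_{ij}q_{ij}$ with $q_{ij}$ fixed functions of $Y(0)$. Fix an ordering of pairs by nondecreasing $|q_{i1}-q_{i2}|$; $\mathcal I_k$ is the first $k$ pairs. $\overline T(\Gamma_0;k)$ is a sum of independent variables: for $i\in\mathcal I_k$ it equals $\max\{q_{i1},q_{i2}\}$ with probability $\Gamma_0/(1+\Gamma_0)$ and $\min\{q_{i1},q_{i2}\}$ otherwise; for $i\notin\mathcal I_k$ it equals $\max\{q_{i1},q_{i2}\}$ with probability 1. $\overline p_{\Gamma_0;k}=\mathbb P(\overline T(\Gamma_0;k)\ge c)|_{c=T}$ for $1\le k\le I$, and by convention $\overline p_{\Gamma_0;0}=1$. *)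

(* Defs.v *)
From HB Require Import structures.
From mathcomp Require Import all_boot all_order all_algebra.
From mathcomp Require Import fingroup perm.
From mathcomp Require Import boolp classical_sets reals constructive_ereal ereal.
Set Implicit Arguments. Unset Strict Implicit. Unset Printing Implicit Defensive.
Import Order.TTheory GRing.Theory Num.Theory.
Local Open Scope ring_scope.

Section Defs.
Variables (R : realType) (I : nat).

(* Assignment: z i = index (in 'I_2) of the treated unit of pair i;
   Z_ij = (z i == j). *)
Definition assignment := {ffun 'I_I -> 'I_2}.

(* True law: P(Z = z) = prod_i prod_j p_ij^{Z_ij} = prod_i p i (z i). *)
Definition probZ (p : 'I_I -> 'I_2 -> R) (z : assignment) : R :=
  \prod_(i < I) p i (z i).

Definition Pr (p : 'I_I -> 'I_2 -> R) (E : pred assignment) : R :=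
  \sum_(z : assignment | E z) probZ p z.

Definition Tstat (q : 'I_I -> 'I_2 -> R) (z : assignment) : R :=
  \sum_(i < I) \sum_(j < 2) (z i == j)%:R * q i j.

Definition gamma_star (p : 'I_I -> 'I_2 -> R) (i : 'I_I) : \bar R :=
  let mx := Num.max (p i 0) (p i 1) in
  let mn := Num.min (p i 0) (p i 1) in
  if mn == 0 then +oo%E else (mx / mn)%:E.

Definition kth_smallest (g : 'I_I -> \bar R) (k : nat) : \bar R :=
  nth +oo%E (sort (fun x y : \bar R => (x <= y)%O) [seq g i | i <- enum 'I_I]) k.-1.

Definition I_star (p : 'I_I -> 'I_2 -> R) (Gamma0 : \bar R) : nat :=
  #|[set i : 'I_I | (Gamma0 < gamma_star p i)%E]|.

Definition theta (Gamma0 : \bar R) : R :=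
  match Gamma0 with
  | EFin r => r / (1 + r)
  | +oo%E => 1
  | -oo%E => 0
  end.

Definition Ik (sigma : {perm 'I_I}) (k : nat) : {set 'I_I} :=
  [set sigma a | a : 'I_I & (a < k)%N].

(* Law of Tbar(Gamma0;k), encoded by w : {ffun 'I_I -> bool};
   w i = true means pair i contributes max{q_i1,q_i2}, false means min. *)
Definition Tbar_weight (sigma : {perm 'I_I}) (Gamma0 : \bar R) (k : nat)
    (w : {ffun 'I_I -> bool}) : R :=
  \prod_(i < I)
     (if i \in Ik sigma k then (if w i then theta Gamma0 else 1 - theta Gamma0)
      else (if w i then 1 else 0)).

Definition Tbar_value (q : 'I_I -> 'I_2 -> R) (w : {ffun 'I_I -> bool}) : R :=
  \sum_(i < I) (if w i then Num.max (q i 0) (q i 1) else Num.min (q i 0) (q i 1)).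

Definition pbar (q : 'I_I -> 'I_2 -> R) (sigma : {perm 'I_I})
    (Gamma0 : \bar R) (k : nat) (c : R) : R :=
  if k == 0%N then 1 else
  \sum_(w : {ffun 'I_I -> bool})
     Tbar_weight sigma Gamma0 k w * (if c <= Tbar_value q w then 1 else 0).

Definition pval (q : 'I_I -> 'I_2 -> R) (sigma : {perm 'I_I}) Gamma0 k (z : assignment) : R :=
  pbar q sigma Gamma0 k (Tstat q z).

Definition CS_gamma q sigma k (alpha : R) (z : assignment) : set (\bar R) :=
  [set g | (1 <= g)%E /\ alpha < pval q sigma g k z].

Definition Gamma_hat q sigma k (alpha : R) (z : assignment) : \bar R :=
  ereal_inf (CS_gamma q sigma k alpha z).

Definition CS_I q sigma (Gamma0 : \bar R) (alpha : R) (z : assignment) : pred nat :=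
  fun n => [exists k : 'I_I.+1, (alpha < pval q sigma Gamma0 k z)%R && (n == I - k)%N].

Definition I_hat q sigma (Gamma0 : \bar R) (alpha : R) (z : assignment) : nat :=
  (I - \max_(k < I.+1 | (alpha < pval q sigma Gamma0 k z)%R) k)%N.

End Defs.

(* Main.v *)
Require Import Defs.
From HB Require Import structures.
From mathcomp Require Import all_boot all_order all_algebra.
From mathcomp Require Import fingroup perm.
From mathcomp Require Import boolp classical_sets reals constructive_ereal ereal.
From mathcomp Require Import lra zify.
Import Order.TTheory GRing.Theory Num.Theory.
Local Open Scope ring_scope.

Set Implicit Arguments. Unset Strict Implicit. Unset Printing Implicit Defensive.

Section Generic.
Variables (R : realType) (I : nat).
Implicit Types (pi : 'I_I -> R) (w : {ffun 'I_I -> bool}) (u : R -> bool).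

Definition wt pi w : R := \prod_(i < I) (if w i then pi i else 1 - pi i).
Definition vl (M m : 'I_I -> R) w : R := \sum_(i < I) (if w i then M i else m i).
Definition EE pi (M m : 'I_I -> R) u : R :=
  \sum_(w : {ffun 'I_I -> bool}) wt pi w * (if u (vl M m w) then 1 else 0).

Definition in01 pi := forall i, 0 <= pi i <= 1.
Definition monou u := forall t t', u t -> t <= t' -> u t'.

Lemma wt_ge0 pi w : in01 pi -> 0 <= wt pi w.
Proof.
move=> h; apply: prodr_ge0 => i _; case: (w i); have := h i; lra.
Qed.

Lemma wt_sum pi : \sum_w wt pi w = 1.
Proof.
rewrite /wt -(bigA_distr_bigA (fun i (b : bool) => if b then pi i else 1 - pi i)).
by rewrite big1 // => i _; rewrite big_bool /=; lra.
Qed.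

Lemma EE_le_u pi M m u1 u2 : in01 pi -> (forall t, u1 t -> u2 t) ->
  EE pi M m u1 <= EE pi M m u2.
Proof.
move=> h h12; apply: ler_sum => w _.
apply: ler_wpM2l; first exact: wt_ge0.
case E1: (u1 _); first by rewrite h12.
by case: (u2 _).
Qed.

Lemma EE_compl pi M m u : EE pi M m (fun t => ~~ u t) = 1 - EE pi M m u.
Proof.
apply/eqP; rewrite eq_sym subr_eq -(wt_sum pi) /EE -big_split /=.
apply/eqP; apply: eq_bigr => w _; case: (u _) => /=; lra.
Qed.

Lemma EE_le1 pi M m u : in01 pi -> EE pi M m u <= 1.
Proof.
move=> h; rewrite -(wt_sum pi); apply: ler_sum => w _.
have := wt_ge0 w h; case: (u _); lra.
Qed.

Definition flip (i : 'I_I) w : {ffun 'I_I -> bool} :=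
  [ffun l => if l == i then ~~ w l else w l].

Lemma flipK i : involutive (flip i).
Proof.
move=> w; apply/ffunP => l; rewrite !ffunE; case: (l == i) => //.
by rewrite negbK.
Qed.

Definition Rst pi i w : R :=
  \prod_(l < I | l != i) (if w l then pi l else 1 - pi l).

Lemma wt_split pi i w :
  wt pi w = (if w i then pi i else 1 - pi i) * Rst pi i w.
Proof. by rewrite /wt (bigD1 i). Qed.

Lemma Rst_flip pi i w : Rst pi i (flip i w) = Rst pi i w.
Proof.
by apply: eq_bigr => l /negbTE hl; rewrite ffunE hl.
Qed.

Lemma Rst_eq pi pi' i w : (forall l, l != i -> pi l = pi' l) ->
  Rst pi i w = Rst pi' i w.
Proof. by move=> h; apply: eq_bigr => l hl; rewrite h. Qed.

Lemma Rst_ge0 pi i w : in01 pi -> 0 <= Rst pi i w.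
Proof.
move=> h; apply: prodr_ge0 => l _; case: (w l); have := h l; lra.
Qed.

Lemma vl_split (M m : 'I_I -> R) i w :
  vl M m w = (if w i then M i else m i) +
     \sum_(l < I | l != i) (if w l then M l else m l).
Proof. by rewrite /vl (bigD1 i). Qed.

Lemma vl_flip (M m : 'I_I -> R) i w : (forall l, m l <= M l) -> w i ->
  vl M m (flip i w) <= vl M m w.
Proof.
move=> hM hw; rewrite (vl_split _ _ i w) (vl_split _ _ i (flip i w)).
rewrite ffunE eqxx hw /=.
have -> : \sum_(l < I | l != i) (if flip i w l then M l else m l) =
          \sum_(l < I | l != i) (if w l then M l else m l).
  by apply: eq_bigr => l /negbTE hl; rewrite ffunE hl.
by rewrite lerD2r.
Qed.

Lemma EE_mono1 pi pi' M m u i :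
  (forall l, l != i -> pi l = pi' l) -> pi i <= pi' i -> in01 pi ->
  (forall l, m l <= M l) -> monou u -> EE pi M m u <= EE pi' M m u.
Proof.
move=> heq hle h01 hM hu.
suff: EE pi M m u + EE pi M m u <= EE pi' M m u + EE pi' M m u by lra.
have E : forall rho, EE rho M m u + EE rho M m u =
  \sum_w (wt rho w * (if u (vl M m w) then 1 else 0) +
          wt rho (flip i w) * (if u (vl M m (flip i w)) then 1 else 0)).
  move=> rho; rewrite big_split /=; congr (_ + _).
  by rewrite /EE (reindex_inj (can_inj (flipK i))).
rewrite !E; apply: ler_sum => w _.
rewrite !(wt_split _ i) !Rst_flip (Rst_eq w heq) ffunE eqxx.
have r0 : 0 <= Rst pi' i w by rewrite -(Rst_eq w heq); exact: Rst_ge0.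
set r := Rst pi' i w.
have hh : 0 <= (pi' i - pi i) * r by apply: mulr_ge0 => //; rewrite subr_ge0.
case hw: (w i) => /=.
- have hv := vl_flip hM (w:=w) (i:=i); rewrite hw in hv.
  case h1: (u (vl M m w)); case h2: (u (vl M m (flip i w))); try nra.
  by move: (hu _ _ h2 (hv isT)); rewrite h1.
- have hv := vl_flip hM (w:=flip i w) (i:=i); rewrite flipK ffunE eqxx hw in hv.
  case h1: (u (vl M m w)); case h2: (u (vl M m (flip i w))); try nra.
  by move: (hu _ _ h1 (hv isT)); rewrite h2.
Qed.

Lemma EE_mono pi pi' M m u : in01 pi -> in01 pi' -> (forall i, pi i <= pi' i) ->
  (forall l, m l <= M l) -> monou u -> EE pi M m u <= EE pi' M m u.
Proof.
move=> h h' hle hM hu.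
pose mix n := fun i : 'I_I => if (i < n)%N then pi' i else pi i.
have mix01 n : in01 (mix n) by move=> i; rewrite /mix; case: ifP.
have step n : EE (mix n) M m u <= EE (mix n.+1) M m u.
  case: (ltnP n I) => hn.
  - apply: (@EE_mono1 _ _ _ _ _ (Ordinal hn)) => //.
    + move=> l hl; rewrite /mix.
      have hne : (nat_of_ord l != n) by apply: contra hl => /eqP e; apply/eqP/val_inj.
      by have -> : (l < n.+1)%N = (l < n)%N by rewrite ltnS; lia.
    + by rewrite /mix /= ltnSn ltnn.
  - have -> : mix n.+1 = mix n.
      apply: funext => i; rewrite /mix.
      by rewrite (leq_trans (ltn_ord i) hn) (leq_trans (ltn_ord i) (leqW hn)).
    by [].
have all n : EE (mix 0) M m u <= EE (mix n) M m u.
  elim: n => // n IH; exact: le_trans IH (step n).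
have e0 : mix 0 = pi by apply: funext => i.
have eI : mix I = pi' by apply: funext => i; rewrite /mix ltn_ord.
by move: (all I); rewrite e0 eI.
Qed.


Definition piS (S : {set 'I_I}) (t : R) (i : 'I_I) : R := if i \in S then t else 1.

Lemma piS01 S t : 0 <= t <= 1 -> in01 (piS S t).
Proof. move=> h; rewrite /in01 => i; rewrite /piS; case: (i \in S) => //; by rewrite ler01 lexx. Qed.

Lemma split2 (f : 'I_I -> R) (i j : 'I_I) : i != j ->
  \sum_(l < I) f l = f i + f j + \sum_(l < I | (l != i) && (l != j)) f l.
Proof.
move=> nij; rewrite (bigD1 i) //= (bigD1 j) /=; last by rewrite eq_sym.
by rewrite addrA.
Qed.

Lemma EE_swap (S : {set 'I_I}) (t : R) (i j : 'I_I) (M m : 'I_I -> R) u :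
  i \notin S -> j \in S -> M i - m i <= M j - m j -> 0 <= t <= 1 -> monou u ->
  EE (piS S t) M m u <= EE (piS (i |: (S :\ j)) t) M m u.
Proof.
move=> iS jS hd ht hu.
have nij : i != j by apply: contraNneq iS => ->.
set S2 := i |: (S :\ j).
pose sw w : {ffun 'I_I -> bool} := [ffun l => w (tperm i j l)].
have swK : involutive sw by move=> w; apply/ffunP => l; rewrite !ffunE tpermK.
rewrite /EE (reindex_inj (can_inj swK)).
apply: ler_sum => w _.
have -> : wt (piS S t) (sw w) = wt (piS S2 t) w.
  rewrite /wt (reindex_inj (@perm_inj _ (tperm i j))) /=.
  apply: eq_bigr => l _; rewrite ffunE tpermK /piS.
  have -> : (tperm i j l \in S) = (l \in S2).
    rewrite /S2; case: tpermP => [->|->|/eqP hi /eqP hj]; rewrite !inE ?eqxx ?jS //=.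
      by rewrite eq_sym (negbTE nij) /= (negbTE iS).
    by rewrite (negbTE hi) hj.
  by [].
case hwj: (w j).
- apply: ler_wpM2l; first by apply: wt_ge0; apply: piS01.
  have hv : vl M m (sw w) <= vl M m w.
    rewrite /vl (split2 _ nij) [X in _ <= X](split2 _ nij).
    have -> : \sum_(l < I | (l != i) && (l != j)) (if sw w l then M l else m l) =
              \sum_(l < I | (l != i) && (l != j)) (if w l then M l else m l).
      by apply: eq_bigr => l /andP[hi hj]; rewrite ffunE tpermD // eq_sym.
    rewrite lerD2r !ffunE tpermL tpermR hwj.
    case: (w i); lra.
  case h1: (u (vl M m (sw w))); last by case: (u _).
  by rewrite (hu _ _ h1 hv).
- have -> : wt (piS S2 t) w = 0.
    rewrite /wt (bigD1 j) //= hwj /piS.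
    have -> : (j \in S2) = false by rewrite /S2 !inE eqxx /= eq_sym (negbTE nij).
    by rewrite subrr mul0r.
  by rewrite !mul0r.
Qed.

End Generic.

Section IkSec.
Variables (R : realType) (I : nat) (sigma : {perm 'I_I}).

Lemma mem_Ik k x : (x \in Ik sigma k) = ((sigma^-1)%g x < k)%N.
Proof.
apply/imsetP/idP => [[a ha ->]|h]; first by rewrite permK; rewrite inE in ha.
by exists ((sigma^-1)%g x); rewrite ?inE ?permKV.
Qed.

Lemma card_Ik k : (k <= I)%N -> #|Ik sigma k| = k.
Proof.
move=> hk; rewrite card_imset; last exact: perm_inj.
rewrite -sum1dep_card -(big_ord_widen _ (fun _ => 1%N) hk).
by rewrite sum1_card card_ord.
Qed.

Lemma EE_toIk (M m : 'I_I -> R) u t k : (k <= I)%N -> 0 <= t <= 1 -> monou u ->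
  (forall a b : 'I_I, (a <= b)%N ->
     M (sigma a) - m (sigma a) <= M (sigma b) - m (sigma b)) ->
  forall S : {set 'I_I}, #|S| = k ->
  EE (piS S t) M m u <= EE (piS (Ik sigma k) t) M m u.
Proof.
move=> hk ht hu hs; set K := Ik sigma k.
have cK : #|K| = k by exact: card_Ik.
suff: forall n (S : {set 'I_I}), (#|S :\: K| <= n)%N -> #|S| = k ->
    EE (piS S t) M m u <= EE (piS K t) M m u.
  by move=> h S hS; apply: (h _ S (leqnn _) hS).
elim=> [|n IH] S hn hS; have [eSK|nSK] := eqVneq S K; rewrite ?eSK //.
- have [j jS jK] : exists2 j, j \in S & j \notin K.
    apply/subsetPn; apply: contra nSK => sub; by rewrite eqEcard sub cK hS leqnn.
  have jD : j \in S :\: K by rewrite inE jS jK.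
  move: hn; rewrite leqn0 => /eqP /cards0_eq eD.
  by rewrite eD inE in jD.
- have [j jS jK] : exists2 j, j \in S & j \notin K.
    apply/subsetPn; apply: contra nSK => sub; by rewrite eqEcard sub cK hS leqnn.
  have [i iK iS] : exists2 i, i \in K & i \notin S.
    apply/subsetPn; apply: contra nSK => sub.
    by rewrite eq_sym eqEcard sub cK hS leqnn.
  have jD : j \in S :\: K by rewrite inE jS jK.
  apply: le_trans (EE_swap (M:=M) (m:=m) iS jS _ ht hu) (IH _ _ _).
  + rewrite -(permKV sigma i) -(permKV sigma j); apply: hs.
    move: iK jK; rewrite /K !mem_Ik; lia.
  + have sub : (i |: (S :\ j)) :\: K \subset (S :\: K) :\ j.
      apply/fintype.subsetP => x; rewrite !inE => /andP[xK /orP[/eqP xi | /andP[xj xS]]].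
        by subst x; rewrite iK in xK.
      by rewrite xj xK xS.
    have := subset_leq_card sub.
    have := cardsD1 j (S :\: K); rewrite jD add1n.
    move=> e1 e2; apply: (leq_trans e2); rewrite -ltnS -e1; exact: hn.
  + rewrite cardsU1 !inE (negbTE iS) andbF /=.
    have := cardsD1 j S; rewrite jS add1n -hS => ->; done.
Qed.

End IkSec.

Lemma exists_sub (T : finType) (S : {set T}) k : (k <= #|S|)%N ->
  exists2 S' : {set T}, S' \subset S & #|S'| = k.
Proof.
suff H: forall n (S : {set T}), #|S| = (n + k)%N ->
    exists2 S' : {set T}, S' \subset S & #|S'| = k.
  by move=> h; apply: (H (#|S| - k)%N); rewrite subnK.
elim=> [|n IH] {}S hS; first by exists S.
have : (0 < #|S|)%N by rewrite hS addSn.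
rewrite card_gt0 => /set0Pn [x xS].
have e := cardsD1 x S; rewrite xS hS add1n addSn in e; case: e => e.
have [S' h1 h2] := IH (S :\ x) (esym e).
by exists S' => //; apply: (fintype.subset_trans h1); exact: subsetDl.
Qed.

Section Main.
Variables (R : realType) (I : nat).
Implicit Types (p q : 'I_I -> 'I_2 -> R).

Definition am q i : 'I_2 := if q i 0 <= q i 1 then 1 else 0.
Definition om q i : 'I_2 := if q i 0 <= q i 1 then 0 else 1.
Definition Mx q i := Num.max (q i 0) (q i 1).
Definition Mn q i := Num.min (q i 0) (q i 1).
Definition pp p q i := p i (am q i).

Definition zof q (w : {ffun 'I_I -> bool}) : assignment I :=
  [ffun i => if w i then am q i else om q i].
Definition wof q (z : assignment I) : {ffun 'I_I -> bool} :=
  [ffun i => z i == am q i].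

Lemma I2_cases (x : 'I_2) : x = 0 \/ x = 1.
Proof. by case: x => [[|[|n]] h] //; [left|right]; apply: val_inj. Qed.

Lemma zof_bij q : bijective (zof q).
Proof.
exists (wof q) => [w|z]; apply/ffunP => i; rewrite !ffunE.
- by case: (w i); rewrite /am /om; case: (q i 0 <= q i 1); rewrite ?eqxx.
- rewrite /am /om; case: (q i 0 <= q i 1); case: (I2_cases (z i)) => ->; by [].
Qed.

Lemma sum2 (x : 'I_2) (f : 'I_2 -> R) : \sum_(j < 2) (x == j)%:R * f j = f x.
Proof.
rewrite (bigD1 x) //= eqxx mul1r big1 ?addr0 // => j /negbTE.
by rewrite eq_sym => ->; rewrite mul0r.
Qed.

Lemma MnMx q i : Mn q i <= Mx q i.
Proof. by rewrite /Mn /Mx; case: (leP (q i 0) (q i 1)) => h; lra. Qed.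

Lemma q_zof q i (b : bool) :
  q i (if b then am q i else om q i) = if b then Mx q i else Mn q i.
Proof.
rewrite /am /om /Mx /Mn; case: (leP (q i 0) (q i 1)) => h; case: b => //.
Qed.

Lemma Tstat_zof q w : Tstat q (zof q w) = vl (Mx q) (Mn q) w.
Proof.
by apply: eq_bigr => i _; rewrite sum2 ffunE q_zof.
Qed.

Lemma probZ_zof p q w : (forall i, p i 0 + p i 1 = 1) ->
  probZ p (zof q w) = wt (pp p q) w.
Proof.
move=> hs; apply: eq_bigr => i _; rewrite ffunE /pp.
case: (w i) => //; have := hs i; rewrite /am /om; case: ifP => _; lra.
Qed.

Lemma Pr_EE p q (E : R -> bool) : (forall i, p i 0 + p i 1 = 1) ->
  Pr p (fun z => E (Tstat q z)) = EE (pp p q) (Mx q) (Mn q) E.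
Proof.
move=> hs; rewrite /Pr big_mkcond /= (reindex (zof q)); last first.
  by apply: onW_bij; exact: zof_bij.
apply: eq_bigr => w _; rewrite Tstat_zof probZ_zof //.
by case: (E _); rewrite ?mulr1 ?mulr0.
Qed.

Lemma Pr_mono p (E1 E2 : pred (assignment I)) : (forall i j, 0 <= p i j) ->
  (forall z, E1 z -> E2 z) -> Pr p E1 <= Pr p E2.
Proof.
move=> h0 h12; rewrite /Pr [X in X <= _]big_mkcond [X in _ <= X]big_mkcond.
apply: ler_sum => z _; case h1: (E1 z); first by rewrite h12.
by case: (E2 z) => //; apply: prodr_ge0.
Qed.

Lemma Pr_total p q : (forall i, p i 0 + p i 1 = 1) -> Pr p (fun _ => true) = 1.
Proof.
move=> hs; have := Pr_EE q (fun _ => true) hs; rewrite /= => ->.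
rewrite /EE -[RHS](wt_sum (pp p q)); apply: eq_bigr => w _; by rewrite /= mulr1.
Qed.

End Main.

Section Q.
Variables (R : realType) (I : nat).
Implicit Types (p q : 'I_I -> 'I_2 -> R).

Lemma minmax_cases (a b : R) :
  (Num.min a b = a /\ Num.max a b = b /\ a <= b) \/
  (Num.min a b = b /\ Num.max a b = a /\ b <= a).
Proof.
by case: (leP a b) => h; [left|right]; do ?split => //; apply: ltW.
Qed.

Lemma theta01 (g : \bar R) : (1 <= g)%E -> 0 <= theta g <= 1.
Proof.
case: g => [r| |] //= h; last by rewrite ler01 lexx.
rewrite lee_fin in h; have hr : 0 < 1 + r by lra.
apply/andP; split; first by apply: divr_ge0; lra.
by rewrite ler_pdivrMr //; lra.
Qed.

Lemma theta_mono (g g' : \bar R) : (1 <= g)%E -> (g <= g')%E -> theta g <= theta g'.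
Proof.
move=> h1 h2; have := theta01 h1; move: h1 h2.
case: g => [r| |] //; case: g' => [r'| |] //= h1 h2 h01; rewrite ?lee_fin in h1 h2.
- have hr : 0 < 1 + r by lra. have hr' : 0 < 1 + r' by lra.
  rewrite ler_pdivrMr // mulrAC ler_pdivlMr //; nra.
- by case/andP: h01.
Qed.

Lemma gamma_ge1 p i : (forall i j, 0 <= p i j) -> (1 <= gamma_star p i)%E.
Proof.
move=> h0; rewrite /gamma_star; case: eqP => [_|/eqP hmn] //=; first exact: leey.
rewrite lee_fin; have := h0 i 0; have := h0 i 1.
case: (minmax_cases (p i 0) (p i 1)) => [[e1 [e2 hl]]|[e1 [e2 hl]]] a b;
  rewrite e1 e2 in hmn *.
- have hp : 0 < p i 0 by rewrite lt_def hmn.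
  by rewrite ler_pdivlMr // mul1r.
- have hp : 0 < p i 1 by rewrite lt_def hmn.
  by rewrite ler_pdivlMr // mul1r.
Qed.

Lemma pp01 p q : (forall i j, 0 <= p i j) -> (forall i, p i 0 + p i 1 = 1) ->
  in01 (pp p q).
Proof.
move=> h0 hs i; rewrite /pp /am; have := hs i; have := h0 i 0; have := h0 i 1.
by case: ifP => _ a b c; apply/andP; split; lra.
Qed.

Lemma pp_le_theta p q i (g : \bar R) : (forall i j, 0 <= p i j) ->
  (forall i, p i 0 + p i 1 = 1) -> (1 <= g)%E -> (gamma_star p i <= g)%E ->
  pp p q i <= theta g.
Proof.
move=> h0 hs h1 h2.
have [mx [mn [hpp [hsum [hmn0 [hmx hg]]]]]] : exists mx mn, pp p q i <= mx /\
   mn + mx = 1 /\ 0 <= mn /\ mn <= mx /\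
   gamma_star p i = if mn == 0 then +oo%E else (mx / mn)%:E.
  exists (Num.max (p i 0) (p i 1)), (Num.min (p i 0) (p i 1)).
  rewrite /gamma_star; split; last split; last split; last split => //.
  - rewrite /pp /am; case: ifP => _;
      case: (minmax_cases (p i 0) (p i 1)) => [[e1 [e2 hl]]|[e1 [e2 hl]]]; rewrite ?e1 ?e2; lra.
  - by rewrite addr_min_max hs.
  - have := h0 i 0; have := h0 i 1.
    by case: (minmax_cases (p i 0) (p i 1)) => [[e1 [e2 hl]]|[e1 [e2 hl]]]; rewrite ?e1 ?e2.
  - by case: (minmax_cases (p i 0) (p i 1)) => [[e1 [e2 hl]]|[e1 [e2 hl]]]; rewrite ?e1 ?e2.
move: h1 h2; rewrite hg; case: g => [r| |] //=; last by move=> _ _; lra.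
move=> h1; rewrite lee_fin in h1; case: eqP => // /eqP hmn.
rewrite lee_fin => h2.
have hm : 0 < mn by rewrite lt_def hmn.
have hr : 0 < 1 + r by lra.
rewrite ler_pdivrMr // in h2; rewrite ler_pdivlMr //.
have : 0 <= (mx - pp p q i) * (1 + r) by apply: mulr_ge0; lra.
nra.
Qed.

Lemma pbar_EE q sigma (g : \bar R) k c : k != 0%N ->
  pbar q sigma g k c =
  EE (piS (Ik sigma k) (theta g)) (Mx q) (Mn q) (fun t => c <= t).
Proof.
move=> hk; rewrite /pbar (negbTE hk); apply: eq_bigr => w _; congr (_ * _).
apply: eq_bigr => i _; rewrite /piS; case: (i \in Ik sigma k) => //.
by case: (w i); rewrite ?subrr.
Qed.

Lemma EE_le_alpha pi (M m : 'I_I -> R) (u : R -> bool) alpha : in01 pi -> 0 <= alpha ->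
  (forall t, u t -> EE pi M m (fun s => t <= s) <= alpha) -> EE pi M m u <= alpha.
Proof.
move=> h01 ha h.
case: (boolP [exists w, u (vl M m w)]) => [/existsP [w0 hw0] | /existsPn hno].
- case: (@arg_minP _ _ _ w0 (fun w => u (vl M m w)) (fun w => vl M m w) hw0) => w1 hw1 hmin.
  apply: le_trans (h _ hw1); apply: ler_sum => w _.
  apply: ler_wpM2l; first exact: wt_ge0.
  case hu: (u (vl M m w)); last by case: ifP; rewrite ?ler01 ?lexx.
  by rewrite hmin // lexx.
- rewrite /EE big1 // => w _; by rewrite (negbTE (hno w)) mulr0.
Qed.

End Q.

Section F.
Variables (R : realType) (I : nat).
Implicit Types (p q : 'I_I -> 'I_2 -> R).

Lemma absmm (a b : R) : `|a - b| = Num.max a b - Num.min a b.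
Proof.
case: (minmax_cases a b) => [[e1 [e2 hl]]|[e1 [e2 hl]]]; rewrite e1 e2.
- by rewrite distrC ger0_norm // subr_ge0.
- by rewrite ger0_norm // subr_ge0.
Qed.

Lemma card_count (P : pred 'I_I) : #|[set x | P x]| = count P (enum 'I_I).
Proof.
rewrite cardsE cardE /enum_mem size_filter count_filter.
by apply: eq_count => x; rewrite /= andbT.
Qed.

Lemma Istar_card p (g : \bar R) :
  (I_star p g + #|[set i | (gamma_star p i <= g)%E]|)%N = I.
Proof.
have e := cardsC [set i | (gamma_star p i <= g)%E]; rewrite card_ord in e.
rewrite -[RHS]e addnC; congr (_ + _)%N.
by apply: eq_card => i; rewrite !inE ltNge.
Qed.

Lemma valid p q (sigma : {perm 'I_I}) (g : \bar R) k alpha :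
  (forall i j, 0 <= p i j) -> (forall i, p i 0 + p i 1 = 1) ->
  (forall a b : 'I_I, (a <= b)%N ->
       `|q (sigma a) 0 - q (sigma a) 1| <= `|q (sigma b) 0 - q (sigma b) 1|) ->
  (1 <= g)%E -> (1 <= k <= I)%N -> 0 <= alpha -> (I_star p g <= I - k)%N ->
  1 - alpha <= Pr p (fun z => alpha < Defs.pval q sigma g k z).
Proof.
move=> h0 hs hsorted hg hk ha hI.
have k0 : k != 0%N by rewrite -lt0n; case/andP: hk.
have hk' : (k <= I)%N by case/andP: hk.
have th01 := theta01 hg.
set th := theta g.
set pb := piS (Ik sigma k) th.
pose G t := EE pb (Mx q) (Mn q) (fun s => t <= s).
have -> : Pr p (fun z => alpha < Defs.pval q sigma g k z) =
          EE (pp p q) (Mx q) (Mn q) (fun t => ~~ (G t <= alpha)).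
  by rewrite -Pr_EE //; apply: eq_bigl => z; rewrite /Defs.pval pbar_EE // ltNge.
rewrite EE_compl.
suff: EE (pp p q) (Mx q) (Mn q) (fun t => G t <= alpha) <= alpha by lra.
have pb01 : in01 pb by apply: piS01.
have hu : monou (fun t => G t <= alpha).
  move=> t t' ht htt'; apply: le_trans ht; apply: EE_le_u => // s hs'.
  exact: le_trans htt' hs'.
set S := [set i | (gamma_star p i <= g)%E].
have cS : (k <= #|S|)%N by have := Istar_card p g; rewrite -/S; lia.
have [S' sub cS'] := exists_sub cS.
apply: le_trans (EE_mono (pi' := piS S' th) _ _ _ (@MnMx _ _ q) hu) _.
- exact: pp01.
- exact: piS01.
- move=> i; rewrite /piS; case: ifP => hi.
  + apply: pp_le_theta => //.
    by have := fintype.subsetP sub i hi; rewrite inE.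
  + by have := pp01 q h0 hs i; case/andP.
apply: le_trans (EE_toIk (sigma:=sigma) hk' th01 hu _ cS') _.
- by move=> a b hab; rewrite /Mx /Mn -!absmm; exact: hsorted.
apply: EE_le_alpha => // t ht; exact: ht.
Qed.

Lemma kth_props p k : (forall i j, 0 <= p i j) -> (1 <= k <= I)%N ->
  (1 <= kth_smallest (gamma_star p) k)%E /\
  (I_star p (kth_smallest (gamma_star p) k) <= I - k)%N.
Proof.
move=> h0 /andP[k1 kI].
rewrite /kth_smallest.
set s := [seq gamma_star p i | i <- enum 'I_I].
set ss := sort _ s.
have sz : size ss = I by rewrite size_sort size_map size_enum_ord.
set g := nth +oo%E ss k.-1.
have kk : (k.-1 < size ss)%N by rewrite sz; lia.
split.
  have : g \in ss by exact: mem_nth.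
  by rewrite mem_sort => /mapP [i _ ->]; exact: gamma_ge1.
suff : (k <= #|[set i | (gamma_star p i <= g)%E]|)%N.
  by have := Istar_card p g; lia.
rewrite card_count -(count_map (gamma_star p) (fun x => (x <= g)%E)) -/s.
have -> : count (fun x => (x <= g)%E) s = count (fun x => (x <= g)%E) ss.
  by apply/esym/seq.permP; rewrite perm_sort perm_refl.
rewrite -(cat_take_drop k ss) count_cat.
have : all (fun x => (x <= g)%E) (take k ss).
  apply/(all_nthP +oo%E) => j; rewrite size_takel ?sz // => hj.
  rewrite nth_take //.
  apply: (le_sorted_leq_nth +oo%E (sort_sorted le_total s)); rewrite ?inE -/ss ?sz; lia.
rewrite all_count => /eqP ->; rewrite size_takel ?sz //; lia.
Qed.

End F.

Unset Implicit Arguments.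
Local Open Scope classical_set_scope.

Lemma pv_anti (R : realType) (I : nat) (q : 'I_I -> 'I_2 -> R) (sigma : {perm 'I_I})
  (g : \bar R) z (k k' : nat) : (1 <= g)%E -> (k' <= k)%N ->
  Defs.pval q sigma g k z <= Defs.pval q sigma g k' z.
Proof.
move=> hg hkk; have th01 := theta01 hg.
rewrite /Defs.pval; case: (posnP k') => [->|hk'].
  rewrite {2}/pbar eqxx; case: (posnP k) => [->|hk]; first by rewrite /pbar eqxx.
  by rewrite pbar_EE ?EE_le1 -?lt0n //; apply: piS01.
have hk : (0 < k)%N by apply: leq_trans hkk.
rewrite !pbar_EE -?lt0n //; apply: EE_mono.
- exact: piS01.
- exact: piS01.
- move=> i; rewrite /piS !mem_Ik.
  case: ifP => h1; case: ifP => h2 //; try lia.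
  by case/andP: th01.
- exact: MnMx.
- by move=> t t' h1 h2; apply: le_trans h1 h2.
Qed.

Lemma pv_monog (R : realType) (I : nat) (q : 'I_I -> 'I_2 -> R) (sigma : {perm 'I_I})
  (g g' : \bar R) z (k : nat) : (1 <= g)%E -> (g <= g')%E ->
  Defs.pval q sigma g k z <= Defs.pval q sigma g' k z.
Proof.
move=> hg hgg; have hg' := le_trans hg hgg.
rewrite /Defs.pval; case: (posnP k) => [->|hk]; first by rewrite /pbar eqxx.
rewrite !pbar_EE -?lt0n //; apply: EE_mono.
- exact: piS01 (theta01 hg).
- exact: piS01 (theta01 hg').
- by move=> i; rewrite /piS; case: ifP => _ //; exact: theta_mono.
- exact: MnMx.
- by move=> t t' h1 h2; apply: le_trans h1 h2.
Qed.

Theorem corollary3 (R : realType) (I : nat) (p q : 'I_I -> 'I_2 -> R)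
    (sigma : {perm 'I_I})
    (p_ge0 : forall i j, 0 <= p i j)
    (p_sum1 : forall i, p i 0 + p i 1 = 1)
    (sigma_sorted : forall a b : 'I_I, (a <= b)%N ->
       `|q (sigma a) 0 - q (sigma a) 1| <= `|q (sigma b) 0 - q (sigma b) 1|) :
  (forall (k : nat) (alpha : R), (1 <= k <= I)%N -> 0 < alpha < 1 ->
     1 - alpha <= Pr p (fun z => `[< CS_gamma q sigma k alpha z
                                     (kth_smallest (gamma_star p) k) >])
     /\ (forall z : assignment I,
           CS_gamma q sigma k alpha z = [set g | (Gamma_hat q sigma k alpha z < g)%E]
        \/ CS_gamma q sigma k alpha z = [set g | (Gamma_hat q sigma k alpha z <= g)%E]))
  /\
  (forall (Gamma0 : \bar R) (alpha : R), (1 <= Gamma0)%E -> 0 < alpha < 1 ->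
     1 - alpha <= Pr p (fun z => CS_I q sigma Gamma0 alpha z (I_star p Gamma0))
     /\ (forall (z : assignment I) (n : nat),
           CS_I q sigma Gamma0 alpha z n = (I_hat q sigma Gamma0 alpha z <= n <= I)%N)).
Proof.
split.
- move=> k alpha hk /andP[a0 a1].
  have k0 : k != 0%N by rewrite -lt0n; case/andP: hk.
  split.
  + have [g1 gI] := kth_props p_ge0 hk.
    apply: le_trans (valid (q:=q) (sigma:=sigma) p_ge0 p_sum1 sigma_sorted g1 hk (ltW a0) gI) _.
    apply: Pr_mono => // z hz; apply/asboolP; rewrite /CS_gamma /=; split => //.
  + move=> z.
    set A := CS_gamma q sigma k alpha z.
    have up : forall a b, A a -> (a <= b)%E -> A b.
      move=> a b [ha1 ha] hab; have hb1 := le_trans ha1 hab; split => //.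
      apply: (lt_le_trans ha); exact: pv_monog.
    have hGA : Gamma_hat q sigma k alpha z = ereal_inf A by [].
    rewrite hGA.
    case: (pselect (A (ereal_inf A))) => hA; [right|left];
      apply: boolp.funext => g; apply: boolp.propext; split => /=.
    * by move=> hg; apply: ereal_inf_lbound.
    * by move=> hg; apply: up hA hg.
    * move=> hg; rewrite lt_neqAle ereal_inf_lbound // andbT.
      by apply/eqP => e; apply: hA; rewrite e.
    * by move=> /ereal_inf_lt [y hy hyg]; apply: up hy (ltW hyg).
- move=> g alpha hg /andP[a0 a1].
  have Pv0 : forall z, alpha < Defs.pval q sigma g 0 z.
    by move=> z; rewrite /Defs.pval /pbar eqxx.
  split.
  + set Is := I_star p g.
    have IsI : (Is <= I)%N by have := Istar_card p g; rewrite -/Is; lia.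
    case: (posnP (I - Is)) => hk0.
    * apply: le_trans (_ : 1 <= _); first lra.
      rewrite -(Pr_total q p_sum1); apply: Pr_mono => // z _.
      apply/existsP; exists ord0; rewrite Pv0 /=; apply/eqP; lia.
    * have hk : (1 <= I - Is <= I)%N by apply/andP; split; [exact: hk0 | exact: leq_subr].
      have hI : (Is <= I - (I - Is))%N by rewrite subKn.
      apply: le_trans (valid (q:=q) (sigma:=sigma) p_ge0 p_sum1 sigma_sorted hg hk (ltW a0) hI) _.
      apply: Pr_mono => // z hz; apply/existsP; exists (inord (I - Is)).
      rewrite inordK ?ltnS ?leq_subr // hz /=; apply/eqP; rewrite subKn //.
  + move=> z n.
    set P := fun k : 'I_I.+1 => alpha < Defs.pval q sigma g k z.
    have [k0 Pk0 eK] : exists2 k0 : 'I_I.+1, P k0 &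
        (\max_(k < I.+1 | (alpha < Defs.pval q sigma g k z)%R) k)%N = k0.
      elim/big_ind: _ => [|x y [kx hx ->] [ky hy ->]|i hi].
      - by exists ord0 => //; apply: Pv0.
      - case: (leqP kx ky) => h.
        + by exists ky => //; apply/maxn_idPr.
        + by exists kx => //; apply/maxn_idPl; apply: ltnW.
      - by exists i.
    have hK : forall k : 'I_I.+1, P k -> (k <= k0)%N.
      by move=> k hk; rewrite -eK; apply: leq_bigmax_cond.
    rewrite /I_hat eK /CS_I.
    apply/existsP/andP => [[k /andP[hk /eqP ->]] | [h1 h2]].
    * split; [apply: leq_sub2l; exact: hK | exact: leq_subr].
    * exists (inord (I - n)); rewrite inordK ?ltnS ?leq_subr //.
      apply/andP; split; last by apply/eqP; lia.
      apply: lt_le_trans Pk0 _; apply: pv_anti => //.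
      by have := ltn_ord k0; lia.
Qed.
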